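(* Let $n\geq 3$ and suppose the dihedral group $\mathrm{D}_{2n}$ of order $2n$ has the $m$-DCI property for some integer $m$ with $1\leq m\leq n-1$. Then $n$ is odd.
   Context: For a group $G$ and a subset $S\subseteq G$ with $1\notin S$, the Cayley digraph $\mathrm{Cay}(G,S)$ has vertex set $G$ and arc set $\{(g,sg)\mid g\in G,\ s\in S\}$. $\mathrm{Cay}(G,S)$ is a CI-digraph if for every $T\subseteq G$ with $1\notin T$ and $\mathrm{Cay}(G,T)\cong\mathrm{Cay}(G,S)$ there is $\alpha\in\mathrm{Aut}(G)$ with $S^\alpha=T$. For a positive integer $m$, $G$ has the $m$-DCI property if every Cayley digraph $\mathrm{Cay}(G,S)$ with $|S|=m$ is a CI-digraph. *)

(* Defs.v *)
From mathcomp Require Import all_boot all_fingroup all_solvable.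
Set Implicit Arguments. Unset Strict Implicit. Unset Printing Implicit Defensive.
Local Open Scope group_scope.

Section Cayley.
Variable gT : finGroupType.

(* Cay(G,S) has arcs (g, s g), s in S; i.e. (g,h) is an arc iff h g^-1 \in S.
   A digraph isomorphism Cay(G,S) -> Cay(G,T) is a bijection f of G
   preserving and reflecting arcs. *)
Definition cay_iso (G S T : {set gT}) : Prop :=
  exists f : gT -> gT,
    [/\ {in G &, injective f}, f @: G = G &
        {in G &, forall g h, (h * g^-1 \in S) = (f h * (f g)^-1 \in T)}].

Definition CI_digraph (G S : {set gT}) : Prop :=
  forall T : {set gT}, T \subset G -> 1 \notin T -> cay_iso G S T ->
    exists2 a : {perm gT}, a \in Aut G & a @: S = T.

Definition DCI_prop (G : {set gT}) (m : nat) : Prop :=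
  forall S : {set gT}, S \subset G -> 1 \notin S -> #|S| = m -> CI_digraph G S.
End Cayley.

(* Main.v *)
Require Import Defs.
From mathcomp Require Import all_boot all_fingroup all_solvable.
From mathcomp Require Import all_order all_algebra.
From mathcomp Require Import ring zify.
Set Implicit Arguments. Unset Strict Implicit. Unset Printing Implicit Defensive.
Import GRing.Theory.

Section Arith.
Variable k : nat.
Hypothesis k_gt1 : (1 < k)%N.
Local Notation n := k.*2.
Lemma n_gt1 : (1 < n)%N. Proof. lia. Qed.
Lemma valZ (i : 'Z_n) : (i < n)%N.
Proof. by rewrite -{2}(Zp_cast n_gt1) ltn_ord. Qed.
Lemma val_add (i j : 'Z_n) : nat_of_ord (i + j)%R = ((i + j) %% n)%N.
Proof. by rewrite [X in (_ %% X)%N = _]/= [X in (_ %% X)%N = _]Zp_cast // n_gt1. Qed.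
Lemma val_opp (i : 'Z_n) : nat_of_ord (- i)%R = ((n - i) %% n)%N.
Proof.
rewrite /=. rewrite [X in ((X - _) %% _)%N = _](Zp_cast n_gt1).
by rewrite [X in (_ %% X)%N = _](Zp_cast n_gt1).
Qed.
Lemma val_one : nat_of_ord (1 : 'Z_n)%R = 1%N.
Proof. by rewrite /= Zp_cast ?n_gt1 // modn_small // n_gt1. Qed.
Lemma val_zero : nat_of_ord (0 : 'Z_n)%R = 0%N.
Proof. by []. Qed.
Definition kZ : 'Z_n := inZp k.
Lemma val_kZ : nat_of_ord kZ = k.
Proof. rewrite /= Zp_cast ?n_gt1 // modn_small //; lia. Qed.

Lemma mod_lt2 (a : nat) : (a < n + n)%N -> (a %% n = if (a < n)%N then a else a - n)%N.
Proof.
move=> h; case: ifP => h2; first by rewrite modn_small.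
have -> : a = ((a - n) + n)%N by rewrite subnK // leqNgt h2.
by rewrite modnDr modn_small ?addnK //; lia.
Qed.

Definition od (i : 'Z_n) := odd (nat_of_ord i).
Lemma od_add i j : od (i + j)%R = od i (+) od j.
Proof. by rewrite /od val_add odd_mod ?oddD // odd_double. Qed.
Lemma od_opp i : od (- i)%R = od i.
Proof.
rewrite /od val_opp odd_mod ?odd_double // oddB ?odd_double //.
by apply: ltnW; apply: valZ.
Qed.
Lemma od_one : od 1%R = true. Proof. by rewrite /od val_one. Qed.
Lemma od_zero : od 0%R = false. Proof. by []. Qed.
Lemma od_kZ : od kZ = odd k. Proof. by rewrite /od val_kZ. Qed.
Lemma od_sub i j : od (i - j)%R = od i (+) od j.
Proof. by rewrite od_add od_opp. Qed.
Lemma od_dbl i : od (i + i)%R = false.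
Proof. by rewrite od_add addbb. Qed.
Lemma od_neq (i j : 'Z_n) : od i != od j -> (i == j) = false.
Proof. by apply: contraNF => /eqP ->. Qed.

Lemma kZ2 : (kZ + kZ = 0)%R.
Proof. apply: ord_inj; rewrite val_add val_kZ /= addnn modnn //. Qed.
Lemma oppkZ : (- kZ = kZ)%R.
Proof. by apply/eqP; rewrite eq_sym -addr_eq0 kZ2. Qed.
Lemma kZ_neq0 : (kZ != 0)%R.
Proof. apply/eqP => /(congr1 (@nat_of_ord _)); rewrite val_kZ /=; lia. Qed.

Lemma dbl0 (d : 'Z_n) : ((d + d == 0)%R = (d == 0%R) || (d == kZ)).
Proof.
have hd := valZ d.
rewrite -!(inj_eq (@ord_inj _)) val_add val_kZ /= mod_lt2; last by lia.
case: ifP => h; apply/idP/idP => [/eqP e|/orP[]/eqP e]; try (apply/eqP; lia);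
  try (by apply/orP; left; apply/eqP; lia); by apply/orP; right; apply/eqP; lia.
Qed.

Definition cc (i : 'Z_n) := (nat_of_ord i < k)%N.
Lemma cc_shift i : cc (i + kZ)%R = ~~ cc i.
Proof.
have hi := valZ i.
rewrite /cc val_add val_kZ mod_lt2; last by lia.
rewrite -leqNgt; case: ifP => h; apply/idP/idP => h'; lia.
Qed.
Lemma cc_diffk (i j : 'Z_n) : cc i = cc j -> ((j - i == kZ)%R = false).
Proof.
move=> h; apply/negbTE/eqP => e.
have : j = (i + kZ)%R by rewrite -e; ring.
move=> ej; move: h; rewrite ej cc_shift; by case: (cc i).
Qed.
Lemma cc_diff0 (i j : 'Z_n) : cc i != cc j -> ((j - i == 0)%R = false).
Proof. by apply: contraNF; rewrite subr_eq0 => /eqP ->. Qed.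

Definition symm (X : {set 'Z_n}) := forall d, ((- d)%R \in X) = (d \in X).

Lemma negd_neq (d : 'Z_n) : d != 0%R -> d != kZ -> ((- d)%R == d) = false.
Proof.
move=> d0 dk; apply/negbTE; apply: contraTN isT => /eqP e.
have : (d + d == 0)%R by rewrite -{1}e addNr.
by rewrite dbl0 (negbTE d0) (negbTE dk).
Qed.

Lemma pool j (X : {set 'Z_n}) : symm X -> 0%R \notin X -> kZ \notin X ->
  (j.*2 <= #|X|)%N -> exists E : {set 'Z_n}, [/\ E \subset X, symm E & #|E| = j.*2].
Proof.
elim: j X => [|j IH] X sX X0 Xk hj.
  by exists set0; split; rewrite ?sub0set ?cards0 // => d; rewrite !inE.
have : X != set0 by rewrite -card_gt0; move: hj; rewrite doubleS; lia.
case/set0Pn=> d Xd.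
have d0 : d != 0%R by apply: contraNneq X0 => <-.
have dk : d != kZ by apply: contraNneq Xk => <-.
have nd := negd_neq d0 dk.
pose X' := X :\: [set d; (- d)%R].
have cX : #|X'| = (#|X| - 2)%N.
  rewrite cardsD (setIidPr _) ?cards2 1?eq_sym ?nd //.
  by apply/subsetP => u; rewrite !inE => /orP[]/eqP ->; rewrite ?sX.
have sX' : symm X'.
  move=> u; rewrite !inE sX eqr_oppLR [(- u)%R == _]eqr_oppLR opprK.
  by case: (u == d); case: (u == (- d)%R).
have [|||E0 [sub sE0 cE0]] := IH X' sX'.
- by rewrite !inE (negbTE X0) andbF.
- by rewrite !inE (negbTE Xk) andbF.
- by rewrite cX; move: hj; rewrite doubleS; lia.
have dE0 : d \notin E0 by apply: contraT => /negPn/(subsetP sub); rewrite !inE eqxx.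
have ndE0 : (- d)%R \notin E0 by apply: contraT => /negPn/(subsetP sub); rewrite !inE eqxx orbT.
exists (d |: ((- d)%R |: E0)); split.
- apply/subsetP => u; rewrite !inE => /orP[/eqP ->//|/orP[/eqP ->|/(subsetP sub)]].
    by rewrite sX.
  by rewrite !inE => /andP[].
- move=> u; rewrite !inE sE0 eqr_oppLR [(- u)%R == _]eqr_oppLR opprK.
  by case: (u == d); case: (u == (- d)%R).
- rewrite cardsU1 cardsU1 !inE eq_sym nd /= dE0 ndE0 cE0 doubleS; lia.
Qed.

Lemma kZ_neq1 : (kZ == 1%R) = false.
Proof. by rewrite -(inj_eq (@ord_inj _)) val_kZ val_one; apply/eqP; lia. Qed.
Lemma one_neq0 : ((1 : 'Z_n) == 0)%R = false.
Proof. by rewrite oner_eq0. Qed.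
Lemma onek_neqm1 : (2 < k)%N -> ((1 + kZ)%R == (- 1)%R) = false.
Proof.
move=> k3; rewrite -addr_eq0 -(inj_eq (@ord_inj _)) !val_add val_kZ val_one /=.
rewrite (modn_small (m := (1 + k)%N)); last lia.
rewrite modn_small; last lia.
by apply/eqP; lia.
Qed.

Lemma addk_eqk (d : 'Z_n) : ((d + kZ)%R == kZ) = (d == 0%R).
Proof. by rewrite -{2}(add0r kZ) (inj_eq (addIr kZ)). Qed.

Lemma cardZ : #|'Z_n| = n.
Proof. by rewrite card_ord Zp_cast // n_gt1. Qed.

Lemma cardC (B : {set 'Z_n}) : #|~: B| = (n - #|B|)%N.
Proof. have := cardsC B; rewrite cardZ; lia. Qed.

Lemma buildZ e : ~~ odd e -> (e <= n - 2)%N ->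
  exists E : {set 'Z_n}, [/\ symm E, 0%R \notin E, kZ \notin E & #|E| = e].
Proof.
move=> ev he.
pose X := ~: [set 0%R; kZ].
have sX : symm X.
  by move=> d; rewrite !inE oppr_eq0 eqr_oppLR oppkZ.
have [|||E [sub sE cE]] := @pool e./2 X sX.
- by rewrite !inE eqxx.
- by rewrite !inE eqxx orbT.
- by rewrite even_halfK // cardC cards2 eq_sym kZ_neq0; lia.
exists E; split=> //; last by rewrite cE even_halfK.
- by apply: contraT => /negPn/(subsetP sub); rewrite !inE eqxx.
- by apply: contraT => /negPn/(subsetP sub); rewrite !inE eqxx orbT.
Qed.

Lemma one_neqm1 : ((1 : 'Z_n) == - 1)%R = false.
Proof. by rewrite -addr_eq0 dbl0 one_neq0 eq_sym kZ_neq1. Qed.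
Lemma kZ_neqm1 : (kZ == - 1)%R = false.
Proof. by rewrite -eqr_oppLR oppkZ kZ_neq1. Qed.

Lemma buildK e : odd e -> (3 <= e)%N -> (e <= n - 3)%N -> (2 < k)%N ->
  exists E : {set 'Z_n},
    [/\ symm E, 0%R \notin E, #|E| = e, 1%R \in E & (1 + kZ)%R \notin E].
Proof.
move=> oe e3 he k3.
pose B : {set 'Z_n} := [set x in [:: 0; kZ; 1; -1; 1 + kZ; -1 + kZ]%R].
pose X := ~: B.
have sX : symm X.
  move=> d; rewrite !inE !eqr_oppLR oppr0 oppkZ ?opprK ?opprD ?opprK ?oppkZ.
  by case: (d == 0%R); case: (d == kZ); case: (d == 1%R); case: (d == (-1)%R);
    case: (d == (1 + kZ)%R); case: (d == (-1 + kZ)%R).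
have cB : (#|B| <= 6)%N by rewrite cardsE; apply: card_size.
have [|||E0 [sub sE0 cE0]] := @pool (e - 3)./2 X sX.
- by rewrite !inE eqxx.
- by rewrite !inE eqxx orbT.
- have ev3 : ~~ odd (e - 3) by rewrite oddB ?oe.
  rewrite even_halfK // /X cardC; lia.
have nE0 u : u \in B -> u \notin E0.
  by move=> uB; apply: contraT => /negPn/(subsetP sub); rewrite inE uB.
have m1E0 : (-1)%R \notin E0 by apply: nE0; rewrite !inE eqxx !orbT.
have oE0 : 1%R \notin E0 by apply: nE0; rewrite !inE eqxx !orbT.
have kE0 : kZ \notin E0 by apply: nE0; rewrite !inE eqxx !orbT.
exists (kZ |: (1%R |: ((-1)%R |: E0))); split.
- move=> d; rewrite !inE sE0 !eqr_oppLR oppkZ opprK.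
  by case: (d == kZ); case: (d == 1%R); case: (d == (-1)%R).
- rewrite !inE ![0%R == _]eq_sym (negbTE kZ_neq0) one_neq0 eqr_oppLR oppr0 one_neq0 /=.
  by apply: nE0; rewrite !inE eqxx.
- rewrite !cardsU1 !inE kZ_neq1 kZ_neqm1 one_neqm1 (negbTE m1E0) (negbTE oE0) (negbTE kE0) /=.
  have ev3 : ~~ odd (e - 3) by rewrite oddB ?oe.
  rewrite cE0 even_halfK //; lia.
- by rewrite !inE eqxx orbT.
- rewrite !inE onek_neqm1 // negb_or.
  rewrite -{2}(add0r kZ) (inj_eq (addIr kZ)) one_neq0 /=.
  rewrite -{2}(addr0 1%R) (inj_eq (addrI 1%R)) (negbTE kZ_neq0) /=.
  by apply: nE0; rewrite !inE eqxx !orbT.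
Qed.
End Arith.

Section Generic.
Local Open Scope group_scope.
Variable gT : finGroupType.
Implicit Types S T : {set gT}.

Definition arcs (f : gT -> gT) S T := forall g h, (h * g^-1 \in S) = (f h * (f g)^-1 \in T).

Lemma inj_single f S T s : arcs f S T -> (forall u, (u \in S) = (u == s)) -> injective f.
Proof.
move=> fa hS h1 h2 e.
have := fa h1 (s * h1); rewrite mulgK hS eqxx e -fa hS => /esym/eqP.
rewrite -mulgA -{2}(mulg1 s) => /mulgI/eqP; rewrite -eq_mulgV1.
by move/eqP.
Qed.

Lemma cay_iso_of f S T : arcs f S T -> injective f -> cay_iso [set: gT] S T.
Proof.
move=> fa finj; exists f; split.
- by move=> a b _ _; apply: finj.
- by apply/eqP; rewrite eqEcard subsetT card_imset // leqnn.
- by move=> g h _ _; apply: fa.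
Qed.

Lemma iso_card S T : cay_iso [set: gT] S T -> #|S| = #|T|.
Proof.
case=> f [finj _ fa].
have finj' : injective f by move=> a b; apply: finj; rewrite inE.
rewrite -(card_rcoset T (f 1)) -(card_preimset (T :* f 1) finj').
apply: eq_card => h; rewrite !inE mem_rcoset -fa ?inE //.
by rewrite invg1 mulg1.
Qed.

Definition compl S := ~: (1 |: S).

Lemma iso_compl S T : cay_iso [set: gT] S T -> cay_iso [set: gT] (compl S) (compl T).
Proof.
case=> f [finj fim fa]; exists f; split=> // g h Gg Gh.
rewrite !inE -fa // -!eq_mulgV1.
by rewrite (inj_in_eq finj).
Qed.

Lemma card_compl S : 1 \notin S -> #|compl S| = (#|gT| - (#|S|).+1)%N.
Proof.
move=> S1; by rewrite /compl -[#|gT|](cardsC (1 |: S)) cardsU1 S1 /= add1n addKn.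
Qed.

Variable a : {perm gT}.
Hypothesis Aa : a \in Aut [set: gT].

Lemma aM u v : a (u * v) = a u * a v.
Proof. by move/morphicP: (Aut_morphic Aa); apply; rewrite inE. Qed.
Lemma a1 : a 1 = 1.
Proof. by apply: (@mulgI _ (a 1)); rewrite -aM !mulg1. Qed.
Lemma aX u m : a (u ^+ m) = a u ^+ m.
Proof. by elim: m => [|m IH]; rewrite ?a1 // !expgS aM IH. Qed.

Lemma imsetC_perm (X : {set gT}) : a @: (~: X) = ~: (a @: X).
Proof.
apply/setP=> u; rewrite -[u](permKV a) inE !(mem_imset _ _ (@perm_inj _ a)).
by rewrite inE.
Qed.

Lemma aut_compl S T : 1 \notin S -> 1 \notin T ->
  a @: compl S = compl T -> a @: S = T.
Proof.
move=> S1 T1; rewrite /compl imsetC_perm imsetU1 a1 => /setC_inj e.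
have aS1 : 1 \notin a @: S.
  by rewrite -a1 (mem_imset _ _ (@perm_inj _ a)).
by rewrite -(setU1K aS1) e setU1K.
Qed.
End Generic.

Section Grp.
Local Open Scope group_scope.
Variables (gT : finGroupType) (k : nat) (x y : gT).
Hypotheses (k_gt1 : (1 < k)%N) (ox : #[x] = k.*2) (oy : #[y] = 2)
  (xy : x ^ y = x^-1) (notXy : y \notin <[x]>)
  (defG : <[x]> * <[y]> = [set: gT]).
Local Notation n := k.*2.
Local Notation Z := 'Z_n.

Definition R (i : Z) := x ^+ i.
Definition Q (i : Z) := x ^+ i * y.

Lemma expmod a : x ^+ (a %% n) = x ^+ a.
Proof. by have := expg_mod_order x a; rewrite ox. Qed.
Lemma expZ (i j : Z) : x ^+ (i + j)%R = x ^+ i * x ^+ j.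
Proof. by rewrite val_add // expmod expgD. Qed.
Lemma exp0 : x ^+ (0 : Z)%R = 1. Proof. by []. Qed.
Lemma expN (i : Z) : x ^+ (- i)%R = (x ^+ i)^-1.
Proof. by apply/eqP; rewrite eq_sym eq_invg_mul -expZ subrr. Qed.
Lemma y2 : y * y = 1. Proof. by rewrite -(expgS y 1) -oy expg_order. Qed.
Lemma yV : y^-1 = y. Proof. by apply/eqP; rewrite eq_invg_mul y2. Qed.
Lemma yx (i : Z) : y * x ^+ i = x ^+ (- i)%R * y.
Proof.
have : (x ^+ i) ^ y = x ^+ (- i)%R by rewrite conjXg xy expN expgVn.
by rewrite /conjg yV => <-; rewrite -!mulgA y2 mulg1.
Qed.

Lemma mulRR i j : R i * R j = R (i + j)%R. Proof. by rewrite /R expZ. Qed.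
Lemma mulRQ i j : R i * Q j = Q (i + j)%R. Proof. by rewrite /R /Q mulgA expZ. Qed.
Lemma mulQR i j : Q i * R j = Q (i - j)%R.
Proof. by rewrite /R /Q -mulgA yx mulgA expZ. Qed.
Lemma mulQQ i j : Q i * Q j = R (i - j)%R.
Proof. by rewrite /Q mulgA mulQR /Q -mulgA y2 mulg1. Qed.
Lemma invR i : (R i)^-1 = R (- i)%R. Proof. by rewrite /R expN. Qed.
Lemma invQ i : (Q i)^-1 = Q i.
Proof. by apply/eqP; rewrite eq_invg_mul mulQQ subrr. Qed.
Lemma R0 : R 0%R = 1. Proof. by []. Qed.

Lemma R_inj : injective R.
Proof.
move=> i j /eqP; rewrite /R eq_expg_mod_order ox !modn_small ?valZ //.
by move/eqP/ord_inj.
Qed.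
Lemma Q_inj : injective Q.
Proof. by move=> i j /mulIg; apply: R_inj. Qed.
Lemma RQ_neq i j : (R i == Q j) = false.
Proof.
apply/negbTE/eqP => e; case/negP: notXy.
have -> : y = (x ^+ j)^-1 * x ^+ i by rewrite -/(R i) e /Q mulKg.
by rewrite groupM ?groupV ?mem_cycle.
Qed.

Lemma cover g : (exists i, g = R i) \/ (exists i, g = Q i).
Proof.
have : g \in <[x]> * <[y]> by rewrite defG inE.
case/mulsgP=> u v /cycleP[a ->] /cycleP[b ->] ->.
have ea : x ^+ a = R (inZp a).
  by rewrite /R /= Zp_cast ?(n_gt1 k_gt1) // expmod.
rewrite -(expg_mod_order y) oy ea.
have : (b %% 2 < 2)%N by rewrite ltn_mod.
case: (b %% 2)%N => [|[|//]] _; first by left; exists (inZp a); rewrite mulg1.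
by right; exists (inZp a).
Qed.
Definition U (A B : {set Z}) : {set gT} := R @: A :|: Q @: B.

Lemma memRU A B d : (R d \in U A B) = (d \in A).
Proof.
rewrite /U inE (mem_imset _ _ R_inj).
case: imsetP => [[j _ /eqP]|_]; last by rewrite orbF.
by rewrite RQ_neq.
Qed.
Lemma memQU A B d : (Q d \in U A B) = (d \in B).
Proof.
rewrite /U inE (mem_imset _ _ Q_inj).
case: imsetP => [[j _ /eqP]|_]; last by [].
by rewrite eq_sym RQ_neq.
Qed.

Definition mkf (fR fQ : Z -> gT) (g : gT) : gT :=
  if [pick i | R i == g] is Some i then fR i else
  if [pick i | Q i == g] is Some i then fQ i else g.
Lemma mkfR fR fQ i : mkf fR fQ (R i) = fR i.
Proof.
rewrite /mkf; case: pickP => [j /eqP/R_inj -> //|/(_ i)].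
by rewrite eqxx.
Qed.
Lemma mkfQ fR fQ i : mkf fR fQ (Q i) = fQ i.
Proof.
rewrite /mkf; case: pickP => [j|_]; first by rewrite RQ_neq.
case: pickP => [j /eqP/Q_inj -> //|/(_ i)].
by rewrite eqxx.
Qed.

Section F1.
Variable E : {set Z}.
Hypothesis symE : forall d, ((- d)%R \in E) = (d \in E).
Lemma eqE (a b : Z) : a = b -> (a \in E) = (b \in E). Proof. by move->. Qed.
Lemma eqEN (a b : Z) : a = (- b)%R -> (a \in E) = (b \in E). Proof. by move->. Qed.

Definition SF1 := U (kZ k |: [set d | (d + d)%R \in E]) [set d | (d + d - 1)%R \in E].
Definition TF1 := U E (0%R |: E).
Definition fR1 (i : Z) := if cc i then R (i + i)%R else Q (- (i + i))%R.
Definition fQ1 (i : Z) := if cc i then R (1 - (i + i))%R else Q (i + i - 1)%R.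
Definition f1 := mkf fR1 fQ1.

Lemma dblm1 (a : Z) : ((a + a - 1)%R == 0%R) = false.
Proof. by apply: od_neq; rewrite od_sub // od_dbl // od_one. Qed.

Lemma arcs1 g h : (h * g^-1 \in SF1) = (f1 h * (f1 g)^-1 \in TF1).
Proof.
case: (cover g) => -[i ->]; case: (cover h) => -[j ->];
rewrite /f1 ?mkfR ?mkfQ /fR1 /fQ1 ?invR ?invQ ?mulRR ?mulRQ ?mulQR ?mulQQ /SF1
  ?memRU ?memQU;
case cj: (cc j); case ci: (cc i);
  rewrite ?invR ?invQ ?mulRR ?mulRQ ?mulQR ?mulQQ /TF1 ?memRU ?memQU ?in_setU1 ?inE.
- have := @cc_diffk k k_gt1 i j; rewrite ci cj => /(_ erefl) -> /=.
  by apply: eqE; ring.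
- have := @cc_diff0 k i j; rewrite ci cj => /(_ isT) h0.
  have -> : (j + j - (i + i) = (j - i) + (j - i))%R by ring.
  by rewrite (dbl0 k_gt1) h0.
- have := @cc_diff0 k i j; rewrite ci cj => /(_ isT) h0.
  have -> : (- (j + j) - - (i + i) = - ((j - i) + (j - i)))%R by ring.
  by rewrite oppr_eq0 symE (dbl0 k_gt1) h0.
- have := @cc_diffk k k_gt1 i j; rewrite ci cj => /(_ erefl) -> /=.
  by apply: eqEN; ring.
- by apply: eqEN; ring.
- have -> : (1 - (j + j) - (i + i) = - ((j + i) + (j + i) - 1))%R by ring.
  rewrite oppr_eq0 dblm1 symE /=; by apply: eqE; ring.
- have -> : (j + j - 1 - - (i + i) = (j + i) + (j + i) - 1)%R by ring.
  rewrite dblm1 /=; by apply: eqE; ring.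
- by apply: eqE; ring.
- by apply: eqE; ring.
- have -> : (j + j + (i + i - 1) = (j + i) + (j + i) - 1)%R by ring.
  by rewrite dblm1.
- have -> : (- (j + j) - - (1 - (i + i)) = - ((j + i) + (j + i) - 1))%R by ring.
  by rewrite oppr_eq0 dblm1 symE.
- by apply: eqEN; ring.
- have := @cc_diffk k k_gt1 i j; rewrite ci cj => /(_ erefl) -> /=.
  by apply: eqEN; ring.
- have := @cc_diff0 k i j; rewrite ci cj => /(_ isT) h0.
  have -> : (1 - (j + j) + (i + i - 1) = - ((j - i) + (j - i)))%R by ring.
  by rewrite oppr_eq0 symE (dbl0 k_gt1) h0.
- have := @cc_diff0 k i j; rewrite ci cj => /(_ isT) h0.
  have -> : (j + j - 1 - - (1 - (i + i)) = (j - i) + (j - i))%R by ring.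
  by rewrite (dbl0 k_gt1) h0.
- have := @cc_diffk k k_gt1 i j; rewrite ci cj => /(_ erefl) -> /=.
  by apply: eqE; ring.
Qed.
End F1.

Lemma eqk (a : Z) : ((a + kZ k)%R == 0%R) = (a == kZ k).
Proof. by rewrite addr_eq0 (oppkZ k_gt1). Qed.
Lemma eqNk (a : Z) : ((- a)%R == kZ k) = (a == kZ k).
Proof. by rewrite eqr_oppLR (oppkZ k_gt1). Qed.

Section F2.
Hypothesis oddk : odd k.
Variable A : {set Z}.
Hypothesis symA : forall d, ((- d)%R \in A) = (d \in A).
Hypothesis evA : forall d, d \in A -> od d = false.
Lemma notA d : od d -> (d \in A) = false.
Proof. by move=> h; apply/negbTE/negP => /evA; rewrite h. Qed.
Lemma neq0 (d : Z) : od d -> (d == 0%R) = false.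
Proof. by move=> h; apply: od_neq; rewrite h. Qed.
Lemma neqk (d : Z) : od d = false -> (d == kZ k) = false.
Proof. by move=> h; apply: od_neq; rewrite h (od_kZ k_gt1) oddk. Qed.

Lemma eqA (a b : Z) : a = b -> (a \in A) = (b \in A). Proof. by move->. Qed.
Lemma eqAN (a b : Z) : a = (- b)%R -> (a \in A) = (b \in A). Proof. by move->. Qed.
Lemma neqo (d e : Z) : od d -> od e = false -> (d == e) = false.
Proof. by move=> h1 h2; apply: od_neq; rewrite h1 h2. Qed.

Definition SF2 := U (kZ k |: A) set0.
Definition TF2 := U A [set 0%R].
Definition fR2 (i : Z) := if ~~ od i then R i else Q (kZ k - i)%R.
Definition fQ2 (i : Z) := if ~~ od i then R (i + kZ k)%R else Q (- i)%R.
Definition f2 := mkf fR2 fQ2.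

Ltac odc := do 3 rewrite ?(od_sub k_gt1) ?(od_add k_gt1) ?(od_opp k_gt1); rewrite ?(od_kZ k_gt1) ?oddk.

Lemma arcs2 g h : (h * g^-1 \in SF2) = (f2 h * (f2 g)^-1 \in TF2).
Proof.
case: (cover g) => -[i ->]; case: (cover h) => -[j ->];
rewrite /f2 ?mkfR ?mkfQ /fR2 /fQ2 ?invR ?invQ ?mulRR ?mulRQ ?mulQR ?mulQQ /SF2
  ?memRU ?memQU;
case cj: (od j); case ci: (od i);
  rewrite /= ?invR ?invQ ?mulRR ?mulRQ ?mulQR ?mulQQ /TF2 ?memRU ?memQU ?in_setU1 ?inE.
- rewrite neqk /=; first by apply: eqAN; ring.
  by odc; rewrite ci cj.
- rewrite (notA (d := (j - i)%R)) ?orbF; last by odc; rewrite ci cj.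
  have -> : (kZ k - j - - i = - (j - i) + kZ k)%R by ring.
  by rewrite eqk eqNk.
- rewrite (notA (d := (j - i)%R)) ?orbF; last by odc; rewrite ci cj.
  have -> : (j + (kZ k - i) = (j - i) + kZ k)%R by ring.
  by rewrite eqk.
- rewrite neqk //; by odc; rewrite ci cj.
- by rewrite notA //; odc; rewrite ci cj.
- by rewrite neqo //; odc; rewrite ci cj.
- by rewrite neqo //; odc; rewrite ci cj.
- by rewrite notA //; odc; rewrite ci cj.
- by rewrite notA //; odc; rewrite ci cj.
- by rewrite neqo //; odc; rewrite ci cj.
- by rewrite neqo //; odc; rewrite ci cj.
- by rewrite notA //; odc; rewrite ci cj.
- rewrite neqk /=; first by apply: eqAN; ring.
  by odc; rewrite ci cj.
- rewrite (notA (d := (j - i)%R)) ?orbF; last by odc; rewrite ci cj.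
  have -> : (- j - - (i + kZ k) = - (j - i) + kZ k)%R by ring.
  by rewrite eqk eqNk.
- rewrite (notA (d := (j - i)%R)) ?orbF; last by odc; rewrite ci cj.
  have -> : (j + kZ k - i = (j - i) + kZ k)%R by ring.
  by rewrite eqk.
- rewrite neqk /=; first by apply: eqA; ring.
  by odc; rewrite ci cj.
Qed.
End F2.

Section AutInv.
Variable a : {perm gT}.
Hypothesis Aa : a \in Aut [set: gT].

Lemma R_in i : R i \in <[x]>. Proof. exact: mem_cycle. Qed.
Lemma Q_notin i : Q i \notin <[x]>.
Proof.
apply: contra notXy => Qi.
have -> : y = (x ^+ i)^-1 * Q i by rewrite /Q mulKg.
by rewrite groupM ?groupV ?mem_cycle.
Qed.
Lemma inN_R u : u \in <[x]> -> exists j, u = R j.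
Proof.
case: (cover u) => -[j ->] //; first by exists j.
by rewrite (negbTE (Q_notin j)).
Qed.
Lemma a_x : a x \in <[x]>.
Proof.
case: (cover (a x)) => -[j ej]; first by rewrite ej R_in.
have : a (x * x) = a 1 by rewrite aM // ej mulQQ subrr a1.
move/perm_inj/eqP; rewrite -(expgS x 1) -order_dvdn ox => /dvdn_leq.
move=> /(_ isT); lia.
Qed.
Lemma aN : a @: <[x]> = <[x]>.
Proof.
apply/eqP; rewrite eqEcard card_imset ?leqnn ?andbT; last exact: perm_inj.
apply/subsetP => _ /imsetP[u /cycleP[m ->] ->].
by rewrite aX // groupX // a_x.
Qed.
Lemma a_inN u : (a u \in <[x]>) = (u \in <[x]>).
Proof. by rewrite -{1}aN (mem_imset _ _ (@perm_inj _ a)). Qed.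
Lemma az : a (R (kZ k)) = R (kZ k).
Proof.
have := R_in (kZ k); rewrite -a_inN => /inN_R[j ej].
have e2 : R (j + j)%R = R 0%R.
  by rewrite -mulRR -ej -aM // mulRR (kZ2 k_gt1) R0 a1.
move/R_inj/eqP: e2; rewrite (dbl0 k_gt1) => /orP[/eqP j0|/eqP jk]; last by rewrite ej jk.
have : a (R (kZ k)) = a 1 by rewrite ej j0 R0 a1.
move/perm_inj; rewrite -R0 => /R_inj/eqP; by rewrite (negbTE (kZ_neq0 k_gt1)).
Qed.

Lemma inv_z (S T : {set gT}) : R (kZ k) \in S -> R (kZ k) \notin T -> a @: S = T -> False.
Proof.
move=> Sz Tz e; case/negP: Tz; rewrite -e -az.
by rewrite (mem_imset _ _ (@perm_inj _ a)).
Qed.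
Lemma inv_N (S T : {set gT}) : S \subset <[x]> -> Q 0%R \in T -> a @: S = T -> False.
Proof.
move=> SN TQ e; move: TQ; rewrite -e => /imsetP[u Su eu].
by have := Q_notin 0%R; rewrite eu a_inN (subsetP SN).
Qed.
Lemma inv_k (S T : {set gT}) :
  (forall d : Z, d != 0%R -> d != kZ k -> (R d \in S) = (R (d + kZ k)%R \in S)) ->
  R 1%R \in T -> R (1 + kZ k)%R \notin T -> a @: S = T -> False.
Proof.
move=> PS T1 T1k e.
have := R_in 1%R; rewrite -aN => /imsetP[u Nu eu].
case: (inN_R Nu) => d ed; subst u.
have d0 : d != 0%R.
  apply/eqP => d0; have : R 1%R = R 0%R by rewrite eu d0 R0 a1.
  by move/R_inj/eqP; rewrite oner_eq0.
have dk : d != kZ k.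
  apply/eqP => dk; have : R 1%R = R (kZ k) by rewrite eu dk az.
  move/R_inj/eqP.
  rewrite -(inj_eq (@ord_inj _)) val_kZ // val_one //; lia.
have e2 : a (R (d + kZ k)%R) = R (1 + kZ k)%R by rewrite -mulRR aM // -eu az mulRR.
case/negP: T1k; rewrite -e -e2 (mem_imset _ _ (@perm_inj _ a)) -PS //.
by move: T1; rewrite -e eu (mem_imset _ _ (@perm_inj _ a)).
Qed.
End AutInv.
Lemma card_U A B : #|U A B| = (#|A| + #|B|)%N.
Proof.
rewrite /U cardsU (card_imset _ R_inj) (card_imset _ Q_inj).
suff -> : R @: A :&: Q @: B = set0 by rewrite cards0 subn0.
apply/setP => u; rewrite !inE; apply/negbTE/andP => -[/imsetP[i _ ->]].
by case/imsetP => j _ /eqP; rewrite RQ_neq.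
Qed.

Lemma cardG : #|gT| = (n + n)%N.
Proof.
have -> : #|gT| = #|U setT setT|.
  rewrite -cardsT; apply: eq_card => u; rewrite [u \in [set: gT]]inE.
  by case: (cover u) => -[j ->]; rewrite ?memRU ?memQU inE.
by rewrite card_U cardsT cardZ.
Qed.

Lemma S1_single u : (u \in SF1 set0) = (u == R (kZ k)).
Proof.
case: (cover u) => -[d ->]; rewrite /SF1 ?memRU ?memQU !inE ?orbF.
  by rewrite (inj_eq R_inj).
by rewrite eq_sym RQ_neq.
Qed.
Lemma sym0 : forall d : Z, ((- d)%R \in (set0 : {set Z})) = (d \in set0).
Proof. by move=> d; rewrite !inE. Qed.
Lemma f1_inj : injective f1.
Proof. exact: (inj_single (arcs1 sym0) S1_single). Qed.
Lemma iso1 (E : {set Z}) : symm E -> cay_iso [set: gT] (SF1 E) (TF1 E).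
Proof. by move=> sE; apply: cay_iso_of (arcs1 sE) f1_inj. Qed.

Lemma card_TF1 (E : {set Z}) : 0%R \notin E -> #|TF1 E| = (#|E|).*2.+1.
Proof. move=> E0; rewrite /TF1 card_U cardsU1 E0 /=; lia. Qed.
Lemma one_SF1 (E : {set Z}) : 0%R \notin E -> 1 \notin SF1 E.
Proof.
move=> E0; rewrite -R0 /SF1 memRU !inE eq_sym (negbTE (kZ_neq0 k_gt1)) addr0.
exact: E0.
Qed.
Lemma one_TF1 (E : {set Z}) : 0%R \notin E -> 1 \notin TF1 E.
Proof. by move=> E0; rewrite -R0 /TF1 memRU. Qed.

Section F2b.
Hypothesis oddk : odd k.
Lemma S2_single u : (u \in SF2 set0) = (u == R (kZ k)).
Proof.
case: (cover u) => -[d ->]; rewrite /SF2 ?memRU ?memQU !inE ?orbF.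
  by rewrite (inj_eq R_inj).
by rewrite eq_sym RQ_neq.
Qed.
Lemma ev0 : forall d : Z, d \in (set0 : {set Z}) -> od d = false.
Proof. by move=> d; rewrite inE. Qed.
Lemma f2_inj : injective f2.
Proof. exact: (inj_single (arcs2 oddk sym0 ev0) S2_single). Qed.
Lemma iso2 (A : {set Z}) : symm A -> (forall d, d \in A -> od d = false) ->
  cay_iso [set: gT] (SF2 A) (TF2 A).
Proof. by move=> sA eA; apply: cay_iso_of (arcs2 oddk sA eA) f2_inj. Qed.
End F2b.

Theorem notDCI m : (1 <= m <= n - 1)%N -> ~ DCI_prop [set: gT] m.
Proof.
move=> /andP[m1 mn] D.
have useS (S T : {set gT}) : #|S| = m -> 1 \notin S -> 1 \notin T ->
    cay_iso [set: gT] S T ->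
    (forall a, a \in Aut [set: gT] -> a @: S = T -> False) -> False.
  move=> Sm S1 T1 iso inv.
  have [a Aa e] := D S (subsetT S) S1 Sm T (subsetT T) T1 iso.
  exact: inv a Aa e.
have useC (S T : {set gT}) : #|compl S| = m -> 1 \notin S -> 1 \notin T ->
    cay_iso [set: gT] S T ->
    (forall a, a \in Aut [set: gT] -> a @: S = T -> False) -> False.
  move=> Sm S1 T1 iso inv.
  have C1 (X : {set gT}) : 1 \notin compl X by rewrite !inE eqxx.
  have [a Aa e] := D (compl S) (subsetT _) (C1 S) Sm (compl T) (subsetT _) (C1 T)
    (iso_compl iso).
  exact: inv a Aa (aut_compl Aa S1 T1 e).
have F1 (E : {set Z}) : symm E -> 0%R \notin E ->
    (forall a, a \in Aut [set: gT] -> a @: SF1 E = TF1 E -> False) ->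
    m = (#|E|).*2.+1 \/ m = ((n + n) - (#|E|).*2.+2)%N -> False.
  move=> sE E0 inv [] me.
  - apply: (useS (SF1 E) (TF1 E) _ (one_SF1 E0) (one_TF1 E0) (iso1 sE) inv).
    by rewrite (iso_card (iso1 sE)) card_TF1.
  - apply: (useC (SF1 E) (TF1 E) _ (one_SF1 E0) (one_TF1 E0) (iso1 sE) inv).
    by rewrite card_compl ?one_SF1 // (iso_card (iso1 sE)) card_TF1 // cardG.
have invZ (E : {set Z}) : kZ k \notin E ->
    forall a, a \in Aut [set: gT] -> a @: SF1 E = TF1 E -> False.
  move=> Ek a Aa; apply: inv_z => //.
  - by rewrite /SF1 memRU setU11.
  - by rewrite /TF1 memRU.
have invK (E : {set Z}) : 1%R \in E -> (1 + kZ k)%R \notin E ->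
    forall a, a \in Aut [set: gT] -> a @: SF1 E = TF1 E -> False.
  move=> E1 E1k a Aa; apply: inv_k => //; last by rewrite /TF1 memRU.
    move=> d d0 dk; rewrite /SF1 !memRU !inE.
    rewrite addk_eqk (negbTE d0) (negbTE dk) /=.
    by rewrite addrACA (kZ2 k_gt1) addr0.
  by rewrite /TF1 memRU.
have hn : (n = k + k)%N by rewrite -addnn.
case: (boolP (odd m)) => om.
- have me : m = (m./2).*2.+1 by rewrite odd_halfK // prednK.
  set e := m./2 in me.
  case: (boolP (odd e)) => oe.
  + case: (leqP 3 e) => e3.
    * have [||E [sE E0 cE E1 E1k]] := buildK k_gt1 oe e3; try lia.
      by apply: (F1 E sE E0 (invK E E1 E1k)); left; rewrite cE.
    * have e1 : e = 1%N by move: oe e3; rewrite /e; case: (m./2) => [|[|[|]]].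
      case: (boolP (odd k)) => ok.
      -- pose two : Z := (1 + 1)%R.
         have two0 : (two == 0%R) = false.
           by rewrite (dbl0 k_gt1) one_neq0 // eq_sym kZ_neq1.
         have od2 : od two = false by rewrite od_dbl.
         have kt : (kZ k == two) = false by apply: od_neq; rewrite (od_kZ k_gt1) ok od2.
         have ktn : (kZ k == - two)%R = false.
           by apply: od_neq; rewrite (od_kZ k_gt1) ok od_opp // od2.
         pose A : {set Z} := [set two; (- two)%R].
         have sA : symm A by move=> d; rewrite !inE !eqr_oppLR opprK orbC.
         have eA : forall d, d \in A -> od d = false.
           by move=> d; rewrite !inE => /orP[]/eqP ->; rewrite ?od_opp.
         have Ak : kZ k \notin A by rewrite !inE kt ktn.
         have A0 : 0%R \notin A by rewrite !inE ![0%R == _]eq_sym oppr_eq0 two0.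
         apply: (useS (SF2 A) (TF2 A)).
         ++ rewrite /SF2 card_U cards0 addn0 cardsU1 Ak cards2.
            rewrite -addr_eq0 (dbl0 k_gt1) two0 eq_sym kt /=.
            by rewrite me e1.
         ++ by rewrite -R0 /SF2 memRU !inE eq_sym (negbTE (kZ_neq0 k_gt1)) /= -!in_set2.
         ++ by rewrite -R0 /TF2 memRU.
         ++ exact: iso2.
         ++ move=> a Aa; apply: inv_z => //.
            ** by rewrite /SF2 memRU setU11.
            ** by rewrite /TF2 memRU.
      -- pose E : {set Z} := [set kZ k].
         have sE : symm E by move=> d; rewrite !inE eqr_oppLR (oppkZ k_gt1).
         have E0 : 0%R \notin E by rewrite inE eq_sym (negbTE (kZ_neq0 k_gt1)).
         apply: (F1 E sE E0); last by left; rewrite cards1 me e1.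
         move=> a Aa; apply: inv_N => //; last by rewrite /TF1 memQU setU11.
         apply/subsetP => u; case: (cover u) => -[d ->]; first by rewrite R_in.
         rewrite /SF1 memQU !inE od_neq //.
         by rewrite (od_sub k_gt1) od_dbl // od_one // (od_kZ k_gt1) (negbTE ok).
  + have hb : (e <= n - 2)%N by lia.
    have [E [sE E0 Ek cE]] := buildZ k_gt1 oe hb.
    by apply: (F1 E sE E0 (invZ E Ek)); left; rewrite cE.
- have me : m = (m./2).*2 by rewrite even_halfK.
  set e := (n - 1 - m./2)%N.
  have me2 : m = ((n + n) - e.*2.+2)%N by rewrite /e; lia.
  case: (boolP (odd e)) => oe.
  + have h3 : (3 <= e)%N.
      have : (2 <= e)%N by rewrite /e; lia.
      by move: oe; case: (e) => [|[|[|]]].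
    have h4 : (e <= n - 3)%N.
      have he : (e <= n - 2)%N by rewrite /e; lia.
      have hne : e <> (n - 2)%N.
        move=> e2; move: oe; rewrite e2 oddB ?odd_double //; lia.
      lia.
    have h5 : (2 < k)%N by move: h3 h4; rewrite /e; lia.
    have [E [sE E0 cE E1 E1k]] := buildK k_gt1 oe h3 h4 h5.
    by apply: (F1 E sE E0 (invK E E1 E1k)); right; rewrite cE.
  + have hb : (e <= n - 2)%N by rewrite /e; lia.
    have [E [sE E0 Ek cE]] := buildZ k_gt1 oe hb.
    by apply: (F1 E sE E0 (invZ E Ek)); right; rewrite cE.
Qed.
End Grp.

Section Gens.
Local Open Scope group_scope.
Lemma dihedral_gens n : (1 < n)%N -> exists x : dihedral_gtype n.*2, exists y,
  [/\ #[x] = n, #[y] = 2, x ^ y = x^-1, y \notin <[x]> & <[x]> * <[y]> = [set: _]].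
Proof.
move=> n_gt1.
have := isog_refl [set: dihedral_gtype n.*2]%G.
case/(isoGrpP _ (Grp_dihedral n_gt1)) => _.
have oG : #|[set: dihedral_gtype n.*2]| = n.*2 := card_dihedral n_gt1.
case/existsP=> -[x y] /= /eqP[defG xq y2 xy].
have ltqm : (n < n.*2)%N by rewrite -addnn -{1}(add0n n) ltn_add2r; apply: ltnW.
have{} defG: <[x]> * <[y]> = [set: dihedral_gtype n.*2].
  by rewrite -norm_joinEr // norms_cycle xy groupV cycle_id.
have notXy: y \notin <[x]>.
  apply: contraL ltqm => Xy; rewrite -leqNgt.
  suff: (#|[set: dihedral_gtype n.*2]| <= n)%N by rewrite oG.
  rewrite -defG mulGSid ?cycle_subG //.
  by rewrite dvdn_leq ?(ltnW n_gt1) // order_dvdn xq.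
have oy: #[y] = 2 by apply: nt_prime_order (group1_contra notXy).
have ox: #[x] = n.
  apply: double_inj; transitivity #|[set: dihedral_gtype n.*2]|; last exact: oG.
  rewrite -defG TI_cardMg; first by rewrite -!orderE oy muln2.
  by rewrite setIC prime_TIg ?cycle_subG // -orderE oy.
by exists x, y.
Qed.

End Gens.

Theorem lemma3p3 (n m : nat) :
  3 <= n -> 1 <= m <= n - 1 ->
  DCI_prop [set: dihedral_gtype n.*2] m -> odd n.
Proof.
move=> n3 hm D; apply/negPn/negP => en.
pose k := n./2.
have nk : n = k.*2 by rewrite /k even_halfK.
have k_gt1 : (1 < k)%N by move: n3; rewrite nk; lia.
have n_gt1 : (1 < n)%N by lia.
have [x [y [ox oy xy notXy defG]]] := dihedral_gens n_gt1.
have ox' : #[x]%g = k.*2 by rewrite ox -nk.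
have hm' : (1 <= m <= k.*2 - 1)%N by rewrite -nk.
exact: (notDCI k_gt1 ox' oy xy notXy defG hm' D).
Qed.
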